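(* Let $n\ge 4$ and let $G'_n$ be the directed graph with nodes $0,\dots,n-1$ and arcs: $i\to i+1$ for $0\le i\le n-5$; $(n-4)\to(n-3)$; $(n-4)\to(n-1)$; $(n-1)\to(n-2)$; $(n-2)\to(n-1)$; and $j\to 0$ for every $1\le j\le n-1$. For $\pi\in S_n$, the following are equivalent: (1) $\pi\in\mathcal P_n$; (2) $\pi$ is representable by $G'_n$.
   Context: $d_G(x,y)$ is the shortest directed path length from $x$ to $y$ ($\infty$ if none). The distance-count matrix $C_G\in\mathbb{R}^{n\times n}$ has $(C_G)_{i,k}=|\{j: d_G(j,i)=k\}|$. For $\mathbf a\in\mathbb{R}^{\mathbb{N}}$ (with $a_0$ arbitrary) the linear centrality is $f^{\mathbf a}_G(i)=\sum_{k=0}^{n-1}(C_G)_{i,k}a_k$. A permutation $\pi$ of $\{0,\dots,n-1\}$ is representable by $G$ if there is $\mathbf a$ with $f^{\mathbf a}_G(\pi(0))>f^{\mathbf a}_G(\pi(1))>\dots>f^{\mathbf a}_G(\pi(n-1))$. $\mathcal P_n$ is the set of permutations $\pi$ such that, with $\rho=\pi^{-1}$, one of: (1) $2\le\rho(n-1)\le n-3$; (2) $\rho(n-1)=1$ and $\rho(n-2)\ne0$; (3) $\rho(n-1)=n-2$ and $\rho(n-2)\ne n-1$. *)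

(* Defs.v *)
From HB Require Import structures.
From mathcomp Require Import all_boot all_order all_algebra all_fingroup.
From mathcomp Require Import Rstruct.
Set Implicit Arguments. Unset Strict Implicit. Unset Printing Implicit Defensive.
Import Order.TTheory GRing.Theory Num.Theory.

Fixpoint walk (T : finType) (e : rel T) (k : nat) (x y : T) : bool :=
  if k is k'.+1 then [exists z, e x z && walk e k' z y] else x == y.

Definition dist_is (T : finType) (e : rel T) (x y : T) (k : nat) : bool :=
  walk e k x y && [forall m : 'I_k, ~~ walk e m x y].

Definition distC (n : nat) (e : rel 'I_n) (i : 'I_n) (k : nat) : nat :=
  #|[set j : 'I_n | dist_is e j i k]|.

Definition lincent (n : nat) (e : rel 'I_n) (a : nat -> Rdefinitions.R) (i : 'I_n) : Rdefinitions.R :=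
  (\sum_(k < n) (distC e i k)%:R * a k)%R.

Definition representable (n : nat) (e : rel 'I_n) (p : {perm 'I_n}) : Prop :=
  exists a : nat -> Rdefinitions.R, forall s t : 'I_n, val t = (val s).+1 ->
    (lincent e a (p t) < lincent e a (p s))%R.

Definition inPn (n : nat) (p : {perm 'I_n}) : Prop :=
  forall x y : 'I_n, val x = n - 1 -> val y = n - 2 ->
    let r := val ((p^-1)%g x) in let s := val ((p^-1)%g y) in
    (2 <= r <= n - 3) \/ (r = 1 /\ s <> 0) \/ (r = n - 2 /\ s <> n - 1).

Definition Gprime (n : nat) : rel 'I_n := fun i j =>
  [|| ((i + 5 <= n) && (j == i + 1 :> nat)),
      ((i + 4 == n) && (j + 3 == n)),
      ((i + 4 == n) && (j + 1 == n)),
      ((i + 1 == n) && (j + 2 == n)),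
      ((i + 2 == n) && (j + 1 == n))
    | ((1 <= i) && (j == 0 :> nat))].

(* Main.v *)
Require Import Defs.
From mathcomp Require Import all_boot all_order all_algebra all_fingroup.
From mathcomp Require Import Rstruct.
From mathcomp Require Import zify ring lra.
Import Order.TTheory GRing.Theory Num.Theory.
Set Implicit Arguments. Unset Strict Implicit. Unset Printing Implicit Defensive.

Section Dist.
Variables (T : finType) (e : rel T) (D : T -> T -> nat) (y : T).
Hypothesis H0 : D y y = 0.
Hypothesis Hstep : forall x, x != y -> exists z, e x z /\ D x y = (D z y).+1.
Hypothesis Hlb : forall x z, e x z -> D x y <= (D z y).+1.

Lemma walk_lb k x : walk e k x y -> D x y <= k.
Proof.
elim: k x => [|k IH] x /=; first by move/eqP->; rewrite H0.
case/existsP=> z /andP[exz wz]; have := IH _ wz; have := Hlb exz; lia.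
Qed.

Lemma walk_D x : walk e (D x y) x y.
Proof.
move Hd: (D x y) => d; elim: d x Hd => [|d IH] x Hd /=.
  apply/eqP; case: (eqVneq x y) => [//|nxy].
  by have [z [_ Hz]] := Hstep nxy; rewrite Hz in Hd.
case: (eqVneq x y) => [exy|nxy]; first by rewrite exy H0 in Hd.
have [z [exz Hz]] := Hstep nxy.
apply/existsP; exists z; rewrite exz /=; apply: IH; rewrite Hz in Hd; lia.
Qed.

Lemma dist_isE x k : dist_is e x y k = (k == D x y).
Proof.
apply/idP/eqP => [/andP[w /forallP Hf]|->].
  have := walk_lb w; rewrite leq_eqVlt => /orP[/eqP->//|lt].
  by have := Hf (Ordinal lt); rewrite walk_D.
rewrite /dist_is walk_D /=; apply/forallP => m; apply/negP => /walk_lb.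
have := ltn_ord m; lia.
Qed.
End Dist.

Lemma lincentE n (e : rel 'I_n) (D : 'I_n -> 'I_n -> nat) (a : nat -> Rdefinitions.R) i :
  (forall x, dist_is e x i =1 (fun k => k == D x i)) ->
  (forall x, D x i < n) ->
  lincent e a i = (\sum_(j < n) a (D j i))%R.
Proof.
move=> HD Hlt; rewrite /lincent /distC.
transitivity (\sum_(k < n) \sum_(j < n) (if k == D j i :> nat then a k else 0))%R.
  apply: eq_bigr => k _; rewrite -big_mkcond /= sumr_const mulr_natl; congr (_ *+ _)%R.
  by apply: eq_card => j; rewrite inE HD.
rewrite exchange_big /=; apply: eq_bigr => j _.
rewrite (bigD1 (Ordinal (Hlt j))) //= eqxx big1 ?addr0 // => k /negbTE Hk.
by case: ifP => // /eqP Hk'; move: Hk; rewrite -val_eqE /= Hk' eqxx.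
Qed.


Definition Dn (m x y : nat) : nat :=
  if y <= m.+1 then (if x <= y then y - x else y.+1)
  else if y == m.+3 then
    (if x <= m then m.+1 - x else if x == m.+1 then m.+2 else if x == m.+2 then 1 else 0)
  else (if x <= m then m.+2 - x else if x == m.+1 then m.+3 else if x == m.+2 then 0 else 1).

Definition sucn (m x y : nat) : nat :=
  if y <= m.+1 then (if x < y then x.+1 else 0)
  else if y == m.+3 then
    (if x == m.+2 then m.+3 else if x < m then x.+1 else if x == m then m.+3 else 0)
  else (if x == m.+3 then m.+2 else if x < m then x.+1 else if x == m then m.+3 else 0).

Lemma Dn_lt m x y : x < m.+4 -> y < m.+4 -> Dn m x y < m.+4.
Proof. rewrite /Dn => hx hy; repeat case: ifP => /= ?; lia. Qed.

Lemma sucn_lt m x y : x < m.+4 -> y < m.+4 -> sucn m x y < m.+4.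
Proof. rewrite /sucn => hx hy; repeat case: ifP => /= ?; lia. Qed.

Lemma Gp_lb m (x z y : 'I_m.+4) : Gprime x z -> Dn m x y <= (Dn m z y).+1.
Proof.
rewrite /Gprime /Dn; have := ltn_ord x; have := ltn_ord y; have := ltn_ord z.
move: (nat_of_ord x) (nat_of_ord y) (nat_of_ord z) => a b c ha hb hc H.
repeat case: ifP => /= ?; lia.
Qed.

Lemma Gp_step m (x y : 'I_m.+4) : x != y ->
  exists z : 'I_m.+4, Gprime x z /\ Dn m x y = (Dn m z y).+1.
Proof.
move=> nxy; exists (inord (sucn m x y)); rewrite /Gprime inordK ?sucn_lt //.
move: nxy; rewrite -val_eqE /= /Dn /sucn; have := ltn_ord x; have := ltn_ord y.
move: (nat_of_ord x) (nat_of_ord y) => a b ha hb H.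
repeat case: ifP => /= ?; lia.
Qed.

Local Open Scope ring_scope.
Notation R := Rdefinitions.R.

Definition Ff m (a : nat -> R) (y : nat) : R := \sum_(j < m.+4) a (Dn m j y).
Definition Pre (a : nat -> R) t : R := \sum_(0 <= k < t) a k.

Lemma revsum (a : nat -> R) t : \sum_(0 <= j < t) a (t.-1 - j)%N = Pre a t.
Proof.
rewrite /Pre big_nat_rev; apply: eq_big_nat => j hj; congr a; lia.
Qed.

Lemma Pre_S a t : Pre a t.+1 = Pre a t + a t.
Proof. by rewrite /Pre big_nat_recr. Qed.

Lemma Fi m a i : (i <= m.+1)%N -> Ff m a i = Pre a i.+1 + a i.+1 *+ (m.+3 - i).
Proof.
move=> hi; rewrite /Ff -(big_mkord (fun _ => true) (fun j => a (Dn m j i))) (big_cat_nat _ (n := i.+1)) //=; last lia.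
rewrite -revsum; congr (_ + _).
  by apply: eq_big_nat => j hj; rewrite /Dn hi /=; case: ifP => ?; congr a; lia.
rewrite (eq_big_nat _ _ (F2 := fun=> a i.+1)); last first.
  by move=> j hj; rewrite /Dn hi; case: ifP => ?; congr a; lia.
by rewrite sumr_const_nat; congr (_ *+ _); lia.
Qed.

Lemma revsum1 (a : nat -> R) t : \sum_(0 <= j < t) a (t - j)%N = Pre a t.+1 - a 0%N.
Proof. by rewrite -(revsum a t.+1) big_nat_recr //= subnn addrK. Qed.

Lemma revsum2 (a : nat -> R) t : \sum_(0 <= j < t) a (t.+1 - j)%N = Pre a t.+2 - a 0%N - a 1%N.
Proof. rewrite -(revsum1 a t.+1) big_nat_recr //= subSnn; ring. Qed.

Ltac dn := rewrite /Dn; repeat case: ifP => /= ?; lia.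
Lemma Dy1 m j : (j <= m)%N -> Dn m j m.+3 = (m.+1 - j)%N. Proof. dn. Qed.
Lemma Dy2 m : Dn m m.+1 m.+3 = m.+2. Proof. dn. Qed.
Lemma Dy3 m : Dn m m.+2 m.+3 = 1%N. Proof. dn. Qed.
Lemma Dy4 m : Dn m m.+3 m.+3 = 0%N. Proof. dn. Qed.
Lemma Dz1 m j : (j <= m)%N -> Dn m j m.+2 = (m.+2 - j)%N. Proof. dn. Qed.
Lemma Dz2 m : Dn m m.+1 m.+2 = m.+3. Proof. dn. Qed.
Lemma Dz3 m : Dn m m.+2 m.+2 = 0%N. Proof. dn. Qed.
Lemma Dz4 m : Dn m m.+3 m.+2 = 1%N. Proof. dn. Qed.

Lemma Fy m a : Ff m a m.+3 = Pre a m.+3 + a 1%N.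
Proof.
rewrite /Ff -(big_mkord (fun _ => true) (fun j => a (Dn m j m.+3))).
rewrite big_nat_recr // big_nat_recr // big_nat_recr //= Dy2 Dy3 Dy4.
rewrite (eq_big_nat _ _ (F2 := fun j => a (m.+1 - j)%N)); last first.
  by move=> j hj; rewrite Dy1 //; lia.
rewrite (revsum1 a m.+1) !Pre_S; ring.
Qed.

Lemma Fz m a : Ff m a m.+2 = Pre a m.+4.
Proof.
rewrite /Ff -(big_mkord (fun _ => true) (fun j => a (Dn m j m.+2))).
rewrite big_nat_recr // big_nat_recr // big_nat_recr //= Dz2 Dz3 Dz4.
rewrite (eq_big_nat _ _ (F2 := fun j => a (m.+2 - j)%N)); last first.
  by move=> j hj; rewrite Dz1 //; lia.
rewrite (revsum2 a m.+1) !Pre_S; ring.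
Qed.

Local Open Scope ring_scope.

Definition Gf m a i : R := Ff m a i - Ff m a m.+2.
Definition Tt m (a : nat -> R) j : R := Pre a m.+4 - Pre a j.

Lemma GfE m a i : (i <= m.+1)%N -> Gf m a i = a i.+1 * (m.+3 - i)%:R - Tt m a i.+1.
Proof. move=> hi; rewrite /Gf Fi // Fz /Tt mulr_natr; ring. Qed.

Lemma GyE m a : Gf m a m.+3 = a 1%N - a m.+3.
Proof. rewrite /Gf Fy Fz !Pre_S; ring. Qed.

Lemma TtS m a j : Tt m a j = a j + Tt m a j.+1.
Proof. rewrite /Tt (Pre_S a j); ring. Qed.

Lemma stepw (L x T aN : R) : 0 < L -> 0 <= x*(L+1) - (x+T) -> L*aN <= T -> (L+1)*aN <= x + T.
Proof. move=> h1 h2 h3. have h4 : 0 <= L * ((x + T) - (L+1)*aN). nra. nra. Qed.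
Lemma steps1 (L x T aN : R) : 0 < L -> 0 < x*(L+1) - (x+T) -> L*aN <= T -> (L+1)*aN < x + T.
Proof. move=> h1 h2 h3. have h4 : 0 < L * ((x + T) - (L+1)*aN). nra. nra. Qed.
Lemma steps2 (L x T aN : R) : 0 < L -> 0 <= x*(L+1) - (x+T) -> L*aN < T -> (L+1)*aN < x + T.
Proof. move=> h1 h2 h3. have h4 : 0 < L * ((x + T) - (L+1)*aN). nra. nra. Qed.

Lemma sign_inv m a : (forall i, (i <= m.+1)%N -> 0 <= Gf m a i) ->
  forall d, (d <= m.+1)%N ->
   (d.+1%:R * a m.+3 <= Tt m a (m.+3 - d)) /\
   ((exists i, (m.+2 - d <= i <= m.+1)%N /\ 0 < Gf m a i) -> d.+1%:R * a m.+3 < Tt m a (m.+3 - d)).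
Proof.
move=> Hg; elim=> [_|d IH hd].
  rewrite subn0 /Tt !Pre_S mulr1n; split; first lra.
  by case=> i [hi _]; lia.
have [IH1 IH2] := IH (ltnW hd).
have hj : (m.+3 - d = (m.+3 - d.+1).+1)%N by lia.
have := Hg (m.+3 - d.+2)%N (ltac:(lia)); rewrite GfE; last lia.
have -> : ((m.+3 - d.+2).+1 = m.+3 - d.+1)%N by lia.
have -> : (m.+3 - (m.+3 - d.+2) = d.+2)%N by lia.
rewrite (TtS _ _ (m.+3 - d.+1)) -hj => Gj.
set x := a (m.+3 - d.+1)%N in Gj *; set T' := Tt m a (m.+3 - d) in Gj IH1 IH2 *.
have hL : (0 < d%:R + 1 :> R) by have := ler0n R d; lra.
rewrite -!natr1 in Gj IH1 IH2 *.
split; first exact: stepw Gj IH1.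
case=> i [hi Gi].
case: (leqP (m.+2 - d) i) => hi2.
  have hi' : (m.+2 - d <= i <= m.+1)%N by move: hi => /andP[? ?]; apply/andP; split; lia.
  have := IH2 (ex_intro _ i (conj hi' Gi)) => IH3; exact: steps2 Gj IH3.
have ei : i = (m.+3 - d.+2)%N by move: hi => /andP[? ?]; lia.
move: Gi; rewrite ei GfE; last lia.
have -> : ((m.+3 - d.+2).+1 = m.+3 - d.+1)%N by lia.
have -> : (m.+3 - (m.+3 - d.+2) = d.+2)%N by lia.
rewrite (TtS _ _ (m.+3 - d.+1)) -hj -/x -/T' -!natr1 => Gs; exact: steps1 Gs IH1.
Qed.

Lemma sign m a : (forall i, (i <= m.+1)%N -> 0 <= Gf m a i) ->
  0 <= Gf m a m.+3 /\ ((exists i, (i <= m.+1)%N /\ 0 < Gf m a i) -> 0 < Gf m a m.+3).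
Proof.
move=> Hg; have [I1 I2] := sign_inv Hg (leqnn m.+1).
have := Hg 0%N isT; rewrite GfE // subn0 (TtS _ _ 1) => G0.
have e2 : (m.+3 - m.+1 = 2)%N by lia.
rewrite e2 in I1 I2.
rewrite GyE; set T2 := Tt m a 2 in G0 I1 I2 *.
have hm : (0 <= m%:R :> R) by rewrite ler0n.
rewrite -!natr1 in G0 I1 I2 *.
split; first nra.
case=> i [hi Gi]; case: (posnP i) => [i0|ip].
  move: Gi; rewrite i0 GfE // subn0 (TtS _ _ 1) -/T2 -!natr1 => Gs; nra.
have hi' : (m.+2 - m.+1 <= i <= m.+1)%N by apply/andP; split; lia.
have := I2 (ex_intro _ i (conj hi' Gi)); nra.
Qed.

Local Open Scope ring_scope.

Fixpoint UU (g : nat -> R) (N d : nat) : R :=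
  if d is d'.+1 then UU g N d' +
    (if d' is 0 then 0 else (g (N - d'.+1)%N + UU g N d') / d'%:R) else 0.
Definition cc g N d : R := if d is 0 then 0 else (g (N - d.+1)%N + UU g N d) / d%:R.
Lemma UUS g N d : UU g N d.+1 = UU g N d + cc g N d.
Proof. by case: d. Qed.

Definition asol g m k : R := if (k <= m.+3)%N then cc g m.+3 (m.+3 - k) else 0.

Lemma Tt_sol g m d : (d <= m.+4)%N -> Tt m (asol g m) (m.+4 - d) = UU g m.+3 d.
Proof.
elim: d => [_|d IH hd]; first by rewrite subn0 /Tt subrr.
have e : (m.+4 - d = (m.+4 - d.+1).+1)%N by lia.
rewrite e in IH.
rewrite TtS IH; last lia.
rewrite UUS addrC /asol ifT; last lia.
by congr (_ + cc _ _ _); lia.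
Qed.

Lemma exists_sol g m : exists a, forall i, (i <= m.+1)%N -> Gf m a i = g i.
Proof.
exists (asol g m) => i hi.
have [k [ei hk]] : exists k, i = (m.+1 - k)%N /\ (k <= m.+1)%N by exists (m.+1 - i)%N; split; lia.
subst i; rewrite GfE // TtS.
have -> : ((m.+1 - k).+2 = m.+4 - k.+1)%N by lia.
rewrite Tt_sol; last lia.
rewrite /asol ifT; last lia.
have -> : (m.+3 - (m.+1 - k).+1 = k.+1)%N by lia.
have -> : (m.+3 - (m.+1 - k) = k.+2)%N by lia.
rewrite /cc.
have -> : (m.+3 - k.+2 = m.+1 - k)%N by lia.
set u := UU g m.+3 k.+1; set v := g (m.+1 - k)%N.
have hk0 : (k.+1%:R : R) != 0 by rewrite pnatr_eq0.
rewrite -!natr1; rewrite -natr1 in hk0; field. all: exact hk0.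
Qed.

Lemma Ff_lin m (a1 a2 a3 : nat -> R) l c x :
  Ff m (fun k => l * a1 k + a2 k + c * a3 k) x = l * Ff m a1 x + Ff m a2 x + c * Ff m a3 x.
Proof. by rewrite /Ff !big_split /= -!mulr_sumr. Qed.

Lemma Gf_lin m (a1 a2 a3 : nat -> R) l c x :
  Gf m (fun k => l * a1 k + a2 k + c * a3 k) x = l * Gf m a1 x + Gf m a2 x + c * Gf m a3 x.
Proof. rewrite /Gf !Ff_lin; ring. Qed.

Definition onev m (k : nat) : R := if (k < m.+3)%N then 1 else 0.

Lemma Tt_onev m d : (d <= m.+3)%N -> Tt m (onev m) (m.+3 - d) = d%:R.
Proof.
elim: d => [_|d IH hd].
  by rewrite subn0 TtS /Tt subrr /onev ltnn addr0.
have e : (m.+3 - d = (m.+3 - d.+1).+1)%N by lia.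
rewrite TtS -e IH; last lia.
rewrite /onev ifT; last lia.
by rewrite -natr1 addrC.
Qed.

Lemma Gf_onev m i : (i <= m.+1)%N -> Gf m (onev m) i = 1.
Proof.
move=> hi; rewrite GfE // /onev ifT; last lia.
have e : (i.+1 = m.+3 - (m.+2 - i))%N by lia.
rewrite [in Tt _ _ _]e Tt_onev; last lia.
have -> : (m.+3 - i = (m.+2 - i).+1)%N by lia.
rewrite -natr1; ring.
Qed.

Lemma Gy_onev m : Gf m (onev m) m.+3 = 1.
Proof. by rewrite GyE /onev ltnn subr0. Qed.

Local Open Scope ring_scope.

Lemma Dn_diag m (y : 'I_m.+4) : Dn m y y = 0%N.
Proof. have := ltn_ord y; move: (nat_of_ord y) => b hb; rewrite /Dn; repeat case: ifP => /= ?; lia. Qed.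

Lemma lincent_Ff m a (x : 'I_m.+4) : lincent (@Gprime m.+4) a x = Ff m a x.
Proof.
rewrite (@lincentE _ _ (fun j i => Dn m j i)) //.
- move=> j k; exact: (@dist_isE _ _ (fun j i : 'I_m.+4 => Dn m j i) x (Dn_diag x)
    (fun z => @Gp_step m z x) (fun u v => @Gp_lb m u v x) j k).
- by move=> j; apply: Dn_lt.
Qed.

Lemma Gf_zero m x : Gf m (fun=> 0) x = 0.
Proof. by rewrite /Gf /Ff !big1 ?subrr. Qed.

Lemma Gf_neg m a x : Gf m (fun k => -1 * a k + 0 + 0 * onev m k) x = - Gf m a x.
Proof.
have := Gf_lin m a (fun=> 0) (onev m) (-1) 0 x; rewrite Gf_zero /= => ->; ring.
Qed.

Lemma above m a : (forall i, (i <= m.+1)%N -> Gf m a i != Gf m a m.+3) ->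
  exists i, (i <= m.+1)%N /\ Gf m a m.+3 < Gf m a i.
Proof.
move=> Hne; case: (boolP [exists i : 'I_m.+2, Gf m a m.+3 < Gf m a i]).
  by case/existsP => i hi; exists i; split => //; have := ltn_ord i; lia.
move/existsPn => H.
set Gy := Gf m a m.+3.
have H2 : forall i, (i <= m.+1)%N -> Gf m a i < Gy.
  move=> i hi; have := H (Ordinal (hi : (i < m.+2)%N)); rewrite /= -leNgt le_eqVlt.
  by rewrite (negbTE (Hne i hi)).
pose b := fun k => -1 * a k + (fun=> 0) k + Gy * onev m k.
have Hb : forall i, (i <= m.+1)%N -> 0 < Gf m b i.
  move=> i hi; rewrite /b Gf_lin Gf_zero Gf_onev //; have := H2 i hi; lra.
have [_ S] := sign (fun i hi => ltW (Hb i hi)).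
have := S (ex_intro _ 0%N (conj (isT : (0 <= m.+1)%N) (Hb 0%N isT))).
by rewrite /b Gf_lin Gf_zero Gy_onev -/Gy; lra.
Qed.

Lemma below m a : (forall i, (i <= m.+1)%N -> Gf m a i != Gf m a m.+3) ->
  exists i, (i <= m.+1)%N /\ Gf m a i < Gf m a m.+3.
Proof.
move=> Hne; have Hne' : forall i, (i <= m.+1)%N -> Gf m (fun k => -1 * a k + 0 + 0 * onev m k) i !=
   Gf m (fun k => -1 * a k + 0 + 0 * onev m k) m.+3.
  by move=> i hi; rewrite !Gf_neg eqr_opp; apply: Hne.
have [i [hi]] := above Hne'; rewrite !Gf_neg ltrN2 => h; by exists i.
Qed.

Local Open Scope ring_scope.

Lemma dir21 m (p : {perm 'I_m.+4}) : representable (@Gprime m.+4) p -> inPn p.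
Proof.
case=> a Ha.
pose F (x : 'I_m.+4) := Ff m a x.
have Ha' : forall s t : 'I_m.+4, nat_of_ord t = (nat_of_ord s).+1 -> F (p t) < F (p s).
  by move=> s t h; rewrite /F -!lincent_Ff; apply: Ha.
have mono : forall s t : 'I_m.+4, (s < t)%N -> F (p t) < F (p s).
  suff H : forall d (s t : 'I_m.+4), nat_of_ord t = (nat_of_ord s + d.+1)%N -> F (p t) < F (p s).
    move=> s t hst; apply: (H (t - s.+1)%N); lia.
  elim=> [|d IH] s t h; first by apply: Ha'; lia.
  have hu : (s + d.+1 < m.+4)%N by have := ltn_ord t; lia.
  have := IH s (Ordinal hu) erefl; have := Ha' (Ordinal hu) t ltac:(simpl; lia); lra.
have inj : forall x y : 'I_m.+4, x != y -> F x != F y.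
  move=> x y nxy; have e1 := permKV p x; have e2 := permKV p y.
  case: (ltngtP (p^-1 x)%g (p^-1 y)%g) => h.
  - by have := mono _ _ h; rewrite e1 e2 => h'; apply/eqP => E; rewrite E ltxx in h'.
  - by have := mono _ _ h; rewrite e1 e2 => h'; apply/eqP => E; rewrite E ltxx in h'.
  - have : (p^-1 x)%g = (p^-1 y)%g by apply: val_inj.
    by move/(congr1 p); rewrite e1 e2 => exy; rewrite exy eqxx in nxy.
pose X : 'I_m.+4 := ord_max.
have GfF : forall x : 'I_m.+4, Gf m a x = F x - Ff m a m.+2 by [].
have Hne : forall i, (i <= m.+1)%N -> Gf m a i != Gf m a m.+3.
  move=> i hi; have := inj (inord i) X; rewrite /F /= inordK; last lia.
  move=> H; apply/negP => /eqP E; move: H; rewrite /Gf in E.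
  have -> : Ff m a i = Ff m a m.+3 by lra.
  rewrite eqxx /= => H0; have : inord i != X by rewrite -val_eqE /= inordK; lia.
  by move/H0.
have [i1 [hi1 G1]] := above Hne.
have [i2 [hi2 G2]] := below Hne.
have posl : forall u v : 'I_m.+4, F v < F u -> ((p^-1 u)%g < (p^-1 v)%g)%N.
  move=> u v h; case: (ltngtP (p^-1 u)%g (p^-1 v)%g) => // h'.
    by have := mono _ _ h'; rewrite !permKV; lra.
  have : (p^-1 u)%g = (p^-1 v)%g by apply: val_inj.
  by move/(congr1 p); rewrite !permKV => e; rewrite e in h; lra.
have Fi : forall i, (i <= m.+1)%N -> F (inord i) = Ff m a i.
  by move=> i hi; rewrite /F inordK //; lia.
have FX : F X = Ff m a m.+3 by [].
have l1 := posl (inord i1) X ltac:(rewrite Fi // FX; rewrite /Gf in G1; lra).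
have l2 := posl X (inord i2) ltac:(rewrite Fi // FX; rewrite /Gf in G2; lra).
move=> x y hx hy /=.
have eX : x = X by apply: val_inj; rewrite hx /=; lia.
subst x.
have ne1 : nat_of_ord (p^-1 y)%g != nat_of_ord (p^-1 (inord i1))%g.
  apply/negP => /eqP /val_inj /(congr1 p); rewrite !permKV => e.
  by move: hy; rewrite e /= inordK; lia.
have ne2 : nat_of_ord (p^-1 y)%g != nat_of_ord (p^-1 (inord i2))%g.
  apply/negP => /eqP /val_inj /(congr1 p); rewrite !permKV => e.
  by move: hy; rewrite e /= inordK; lia.
have := ltn_ord (p^-1 (inord i2))%g.
move: ne1 ne2 l1 l2; set r := nat_of_ord (p^-1 X)%g; set s := nat_of_ord (p^-1 y)%g.
move: (nat_of_ord (p^-1 (inord i1))%g) (nat_of_ord (p^-1 (inord i2))%g) => q1 q2.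
lia.
Qed.

Local Open Scope ring_scope.

Lemma aux1 (Q P H : R) : P != 0 -> - Q / P * P + Q + - H * 1 = - H.
Proof. by move=> hP; field. Qed.

Lemma aux2 (x y z hx hy hs : R) : x - z = hx - hs -> y - z = hy - hs -> hx < hy -> x < y.
Proof. move=> *; lra. Qed.

Lemma dir12 m (p : {perm 'I_m.+4}) : inPn p -> representable (@Gprime m.+4) p.
Proof.
move=> Hp.
pose X : 'I_m.+4 := ord_max.
pose Y : 'I_m.+4 := inord m.+2.
have hY : nat_of_ord Y = m.+2 by rewrite inordK.
have hY' : val Y = (m.+4 - 2)%N by exact: hY.
have hX' : val X = (m.+4 - 1)%N by [].
have := Hp X Y hX' hY'.
pose rho (x : 'I_m.+4) : nat := (p^-1 x)%g.
rewrite -/(rho X) -/(rho Y).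
set r := rho X; set s := rho Y => Hrs.
have small : forall q : 'I_m.+4, nat_of_ord q != r -> nat_of_ord q != s -> (p q <= m.+1)%N.
  move=> q hr hs; case: (ltnP m.+1 (p q)) => // h.
  have : (p q == X) || (p q == Y).
    rewrite -!val_eqE /= hY; have := ltn_ord (p q); lia.
  case/orP => /eqP e.
    by move: hr; rewrite /r /rho -e permK eqxx.
  by move: hs; rewrite /s /rho -e permK eqxx.
have Hrs' : ((1 < r <= m.+1)%N \/ (r = 1%N /\ s <> 0%N) \/ (r = m.+2 /\ s <> m.+3)) by exact: Hrs.
have rlt : (r < m.+4)%N by apply: ltn_ord.
have slt : (s < m.+4)%N by apply: ltn_ord.
pose q1 : nat := if s == 0%N then 1%N else 0%N.
pose q2 : nat := if s == m.+3 then m.+2 else m.+3.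
have hq1 : (q1 < r)%N /\ q1 != s by rewrite /q1; case: ifP => /eqP; lia.
have hq2 : (r < q2 < m.+4)%N /\ q2 != s by rewrite /q2; case: ifP => /eqP; lia.
pose Q1 : 'I_m.+4 := inord q1.
pose Q2 : 'I_m.+4 := inord q2.
have vQ1 : nat_of_ord Q1 = q1 by rewrite inordK //; lia.
have vQ2 : nat_of_ord Q2 = q2 by rewrite inordK //; lia.
have rhop : forall q, rho (p q) = q by move=> q; rewrite /rho permK.
have inv : forall x : 'I_m.+4, inord (nat_of_ord x) = x by move=> x; rewrite inord_val.
pose i1 := nat_of_ord (p Q1).
pose i2 := nat_of_ord (p Q2).
have hi1 : (i1 <= m.+1)%N by apply: small; rewrite vQ1; [have := hq1; lia| case: hq1].
have hi2 : (i2 <= m.+1)%N by apply: small; rewrite vQ2; [have := hq2; lia| case: hq2].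
have ri1 : rho (inord i1) = q1 by rewrite inv rhop.
have ri2 : rho (inord i2) = q2 by rewrite inv rhop.
pose gp (i : nat) : R := if (rho (inord i) < r)%N then ((r - rho (inord i))%N)%:R else 0.
pose gm (i : nat) : R := if (rho (inord i) < r)%N then 0 else - ((rho (inord i) - r)%N)%:R.
have [ap Hap] := exists_sol gp m.
have [am Ham] := exists_sol gm m.
have Pp : 0 < Gf m ap m.+3.
  have Hge : forall i, (i <= m.+1)%N -> 0 <= Gf m ap i.
    by move=> i hi; rewrite Hap // /gp; case: ifP => _ //; rewrite ler0n.
  have [_ S] := sign Hge; apply: S; exists i1; split => //.
  by rewrite Hap // /gp ri1 ifT ?ltr0n; case: hq1 => h _; lia.
have Qn : Gf m am m.+3 < 0.
  pose b := fun k => -1 * am k + 0 + 0 * onev m k.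
  have Hge : forall i, (i <= m.+1)%N -> 0 <= Gf m b i.
    move=> i hi; rewrite /b Gf_neg Ham // /gm; case: ifP => _; rewrite ?oppr0 ?opprK //.
  have [_ S] := sign Hge.
  have : 0 < Gf m b m.+3.
    apply: S; exists i2; split => //.
    rewrite /b Gf_neg Ham // /gm ri2 ifF ?opprK ?ltr0n; case: hq2 => h _; lia.
  by rewrite /b Gf_neg; lra.
set P := Gf m ap m.+3 in Pp; set Q := Gf m am m.+3 in Qn.
pose lam := - Q / P.
have lam0 : 0 < lam by rewrite /lam divr_gt0 // oppr_gt0.
pose h (k : nat) : R := if (k < r)%N then lam * ((r - k)%N)%:R else - ((k - r)%N)%:R.
pose c := - h s.
pose a := fun k => lam * ap k + am k + c * onev m k.
have key : forall x : 'I_m.+4, Gf m a x = h (rho x) - h s.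
  move=> x; rewrite /a Gf_lin.
  case: (ltnP m.+1 x) => hx.
    have : (x == X) || (x == Y) by rewrite -!val_eqE /= hY; have := ltn_ord x; lia.
    case/orP => /eqP ->.
      rewrite Gy_onev -/P -/Q /c -/r /h ltnn subnn mulr0n oppr0 sub0r /lam.
      by apply: aux1; rewrite gt_eqF.
    rewrite -/s hY /Gf !subrr; ring.
  rewrite Hap // Ham // Gf_onev // /gp /gm /c inv /h.
  by case: ifP => _; ring.
have hdec : forall k, h k.+1 < h k.
  move=> k; rewrite /h; case: (ltnP k.+1 r) => h1.
    rewrite ifT; last lia.
    have e : (r - k = (r - k.+1).+1)%N by lia.
    by rewrite e -natr1 mulrDr mulr1 ltrDl.
  case: (ltnP k r) => h2.
    have e1 : (k.+1 - r = 0)%N by lia.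
    have e2 : (r - k = 1)%N by lia.
    by rewrite e1 e2 oppr0 mulr1.
  by rewrite ltrN2 ltr_nat; lia.
exists a => s0 t0 hst; rewrite !lincent_Ff.
have k1 := key (p t0); have k2 := key (p s0); rewrite !rhop in k1 k2.
apply: (aux2 k1 k2); rewrite hst; exact: hdec.
Qed.


Local Close Scope ring_scope.

Theorem theorem8 (n : nat) (hn : 4 <= n) (p : {perm 'I_n}) :
  inPn p <-> representable (@Gprime n) p.
Proof.
case: n hn p => [|[|[|[|m]]]] // _ p.
split; [exact: dir12 | exact: dir21].
Qed.
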